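(* Let $f:\mathbb R^{n+m}\to\mathbb R$ be convex with $g(x)=\inf_y f(x,y)$ finite for every $x$. Let $H_1:\mathbb R^n\to\mathbb R^n$ be the single-valued inverse of $x\mapsto x+\nabla_xg$ and $H:\mathbb R^{n+m}\to\mathbb R^{n+m}$ the single-valued inverse of $(x,y)\mapsto (x,y)+\nabla_{(x,y)}f$, and define $J(x,u,y) = y - \pi_2 H(H_1(x+u)+u,y)$ for $(x,u,y)\in\mathbb R^n\times\mathbb R^n\times\mathbb R^m$, with $\pi_2:\mathbb R^{n+m}\to\mathbb R^m$ the second projection. Then $J$ is Lipschitz in $(x,u,y)$. Moreover, if $(x,y)\mapsto f(x,y) - \frac{\sigma}{2}\|y\|^2$ is convex for some $\sigma>0$, then there is $\lambda>0$ such that for all $x,u\in\mathbb R^n$ and $y_1,y_2\in\mathbb R^m$, $\|J(x,u,y_1) - J(x,u,y_2)\| \ge \lambda \|y_1-y_2\|$.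
   Context: For $h:\mathbb R^k\to\mathbb R$ and $z_0\in\mathbb R^k$, $\nabla_{z_0}h=\{u\in\mathbb R^k: h(z)-h(z_0)\ge u\cdot(z-z_0)\text{ for all } z \text{ sufficiently near } z_0\}$. ''Inverse'' means $H_1(u)=x\iff u\in x+\nabla_xg$ and $H(u,v)=(x,y)\iff (u,v)\in(x,y)+\nabla_{(x,y)}f$; such single-valued inverses exist for convex $g$, $f$. *)

(* Defs.v *)
From HB Require Import structures.
From mathcomp Require Import all_boot all_order all_algebra.
From mathcomp Require Import all_classical all_reals.
Set Implicit Arguments. Unset Strict Implicit. Unset Printing Implicit Defensive.
Import Order.TTheory GRing.Theory Num.Theory.
Local Open Scope ring_scope.
Local Open Scope classical_set_scope.

Definition dotv (R : realType) (k : nat) (u v : 'rV[R]_k) : R :=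
  \sum_(i < k) u ord0 i * v ord0 i.
Definition enorm (R : realType) (k : nat) (v : 'rV[R]_k) : R :=
  Num.sqrt (dotv v v).

Definition convex_fun (R : realType) (k : nat) (h : 'rV[R]_k -> R) : Prop :=
  forall (a b : 'rV[R]_k) (t : R), 0 <= t <= 1 ->
    h ((1 - t) *: a + t *: b) <= (1 - t) * h a + t * h b.

Definition subdiff (R : realType) (k : nat) (h : 'rV[R]_k -> R) (z0 : 'rV[R]_k)
  : set 'rV[R]_k :=
  [set u | exists2 d : R, 0 < d &
     forall z, enorm (z - z0) < d -> dotv u (z - z0) <= h z - h z0].

Definition marg (R : realType) (n m : nat) (f : 'rV[R]_(n + m) -> R)
  (x : 'rV[R]_n) : R := inf (range (fun y : 'rV[R]_m => f (row_mx x y))).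

Definition Jmap (R : realType) (n m : nat) (H1 : 'rV[R]_n -> 'rV[R]_n)
  (H : 'rV[R]_(n + m) -> 'rV[R]_(n + m)) (x u : 'rV[R]_n) (y : 'rV[R]_m)
  : 'rV[R]_m := y - rsubmx (H (row_mx (H1 (x + u) + u) y)).

Definition enorm3 (R : realType) (n m : nat) (x u : 'rV[R]_n) (y : 'rV[R]_m) : R :=
  Num.sqrt (enorm x ^+ 2 + enorm u ^+ 2 + enorm y ^+ 2).

(* Main.v *)
Require Import Defs.
From HB Require Import structures.
From mathcomp Require Import all_boot all_order all_algebra.
From mathcomp Require Import all_classical all_reals.
From mathcomp Require Import ring lra.
Import Order.TTheory GRing.Theory Num.Theory.
Local Open Scope ring_scope.
Local Open Scope classical_set_scope.

Section V.
Context {R : realType}.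
Implicit Types (k : nat).

Lemma dotvC {k} (u v : 'rV[R]_k) : dotv u v = dotv v u.
Proof. by apply: eq_bigr => i _; rewrite mulrC. Qed.

Lemma dotvDl {k} (u v w : 'rV[R]_k) : dotv (u + v) w = dotv u w + dotv v w.
Proof. by rewrite /dotv -big_split; apply: eq_bigr => i _; rewrite !mxE mulrDl. Qed.

Lemma dotvDr {k} (u v w : 'rV[R]_k) : dotv w (u + v) = dotv w u + dotv w v.
Proof. by rewrite dotvC dotvDl !(dotvC w). Qed.

Lemma dotvZl {k} a (u w : 'rV[R]_k) : dotv (a *: u) w = a * dotv u w.
Proof. by rewrite /dotv mulr_sumr; apply: eq_bigr => i _; rewrite !mxE mulrA. Qed.

Lemma dotvZr {k} a (u w : 'rV[R]_k) : dotv w (a *: u) = a * dotv w u.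
Proof. by rewrite dotvC dotvZl dotvC. Qed.

Lemma dotvNl {k} (u w : 'rV[R]_k) : dotv (- u) w = - dotv u w.
Proof. by rewrite -scaleN1r dotvZl mulN1r. Qed.

Lemma dotvNr {k} (u w : 'rV[R]_k) : dotv w (- u) = - dotv w u.
Proof. by rewrite dotvC dotvNl dotvC. Qed.

Lemma dotvBl {k} (u v w : 'rV[R]_k) : dotv (u - v) w = dotv u w - dotv v w.
Proof. by rewrite dotvDl dotvNl. Qed.

Lemma dotvBr {k} (u v w : 'rV[R]_k) : dotv w (u - v) = dotv w u - dotv w v.
Proof. by rewrite dotvDr dotvNr. Qed.

Lemma dotv0l {k} (w : 'rV[R]_k) : dotv 0 w = 0.
Proof. by rewrite -(scale0r (0 : 'rV[R]_k)) dotvZl mul0r. Qed.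

Lemma dotv0r {k} (w : 'rV[R]_k) : dotv w 0 = 0.
Proof. by rewrite dotvC dotv0l. Qed.

Lemma dotv_ge0 {k} (u : 'rV[R]_k) : 0 <= dotv u u.
Proof. by apply: sumr_ge0 => i _; rewrite -expr2 sqr_ge0. Qed.

Lemma dotv_eq0 {k} (u : 'rV[R]_k) : dotv u u = 0 -> u = 0.
Proof.
move=> /eqP; rewrite psumr_eq0 => [/allP H|i _]; last by rewrite -expr2 sqr_ge0.
apply/matrixP => i j; rewrite mxE (ord1 i).
by have := H j (mem_index_enum _); rewrite /= mulf_eq0 orbb => /eqP.
Qed.

Lemma enorm_ge0 {k} (u : 'rV[R]_k) : 0 <= enorm u.
Proof. exact: sqrtr_ge0. Qed.

Lemma enorm_sq {k} (u : 'rV[R]_k) : enorm u ^+ 2 = dotv u u.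
Proof. by rewrite sqr_sqrtr // dotv_ge0. Qed.

Lemma sq_le (a b : R) : 0 <= a -> 0 <= b -> a ^+ 2 <= b ^+ 2 -> a <= b.
Proof. move=> ha hb h; rewrite !expr2 in h; nra. Qed.

Lemma CS {k} (u v : 'rV[R]_k) : dotv u v <= enorm u * enorm v.
Proof.
have [->|nz] := eqVneq v 0; first by rewrite dotv0r /enorm dotv0r sqrtr0 mulr0.
have hV : 0 < dotv v v.
  by rewrite lt_neqAle dotv_ge0 andbT eq_sym; apply/eqP => /dotv_eq0 /eqP; rewrite (negbTE nz).
have h0 := dotv_ge0 (dotv v v *: u - dotv u v *: v).
rewrite !(dotvBl, dotvBr, dotvZl, dotvZr) (dotvC v u) in h0.
set V := dotv v v in hV h0; set U := dotv u u in h0; set c := dotv u v in h0 *.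
have hc : c ^+ 2 <= U * V by rewrite expr2; nra.
have hU : 0 <= U by apply: dotv_ge0.
case: (lerP c 0) => hc0.
  by apply: le_trans hc0 _; rewrite mulr_ge0 // enorm_ge0.
apply: sq_le; [exact: ltW | by rewrite mulr_ge0 // enorm_ge0 |].
by rewrite exprMn !enorm_sq -/U -/V.
Qed.

Lemma CSabs {k} (u v : 'rV[R]_k) : `|dotv u v| <= enorm u * enorm v.
Proof.
case: (lerP 0 (dotv u v)) => h; first by rewrite ger0_norm // CS.
by rewrite ltr0_norm // -dotvNl; apply: le_trans (CS _ _) _; rewrite /enorm dotvNl dotvNr opprK.
Qed.

Lemma enormN {k} (u : 'rV[R]_k) : enorm (- u) = enorm u.
Proof. by rewrite /enorm dotvNl dotvNr opprK. Qed.

Lemma enorm_tri {k} (u v : 'rV[R]_k) : enorm (u + v) <= enorm u + enorm v.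
Proof.
apply: sq_le; [exact: enorm_ge0 | by rewrite addr_ge0 // enorm_ge0 |].
rewrite enorm_sq !(dotvDl, dotvDr) (dotvC v u) sqrrD !enorm_sq.
have := CS u v; lra.
Qed.

Lemma enormZ {k} t (u : 'rV[R]_k) : 0 <= t -> enorm (t *: u) = t * enorm u.
Proof. by move=> ht; rewrite /enorm dotvZl dotvZr mulrA -expr2 sqrtrM ?sqr_ge0 // sqrtr_sqr ger0_norm. Qed.

Lemma enorm0 {k} : enorm (0 : 'rV[R]_k) = 0.
Proof. by rewrite /enorm dotv0l sqrtr0. Qed.

Lemma dotv_row_mx {n m} (a c : 'rV[R]_n) (b d : 'rV[R]_m) :
  dotv (row_mx a b) (row_mx c d) = dotv a c + dotv b d.
Proof. by rewrite /dotv big_split_ord /=; congr (_ + _); apply: eq_bigr => i _; rewrite ?row_mxEl ?row_mxEr. Qed.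

Lemma enorm_rsub {n m} (z : 'rV[R]_(n + m)) : enorm (rsubmx z) <= enorm z.
Proof.
rewrite /enorm ler_sqrt ?dotv_ge0 //. rewrite -[X in _ <= dotv X _](hsubmxK z) -[X in _ <= dotv _ X](hsubmxK z) dotv_row_mx.
by rewrite lerDr dotv_ge0.
Qed.

Lemma enorm_row_mx {n m} (a : 'rV[R]_n) (b : 'rV[R]_m) :
  enorm (row_mx a b) <= enorm a + enorm b.
Proof.
have -> : row_mx a b = row_mx a 0 + row_mx 0 b by rewrite add_row_mx addr0 add0r.
apply: le_trans (enorm_tri _ _) _.
by rewrite /enorm !dotv_row_mx !dotv0l addr0 add0r.
Qed.

Lemma sqid (t : R) {k} (p1 p2 : 'rV[R]_k) :
  (1 - t) * dotv p1 p1 + t * dotv p2 p2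
  - dotv ((1 - t) *: p1 + t *: p2) ((1 - t) *: p1 + t *: p2)
  = t * (1 - t) * dotv (p2 - p1) (p2 - p1).
Proof.
rewrite !(dotvDl, dotvDr, dotvBl, dotvBr, dotvZl, dotvZr) (dotvC p2 p1).
rewrite !(dotvNl, dotvNr) (dotvC p2 p1). ring.
Qed.


Lemma side {k p} (f : 'rV[R]_k -> R) (P : 'rV[R]_k -> 'rV[R]_p) (s : R)
  (PD : forall a b, P (a + b) = P a + P b) (PZ : forall t a, P (t *: a) = t *: P a)
  (hc : convex_fun (fun z => f z - s / 2 * enorm (P z) ^+ 2))
  (z1 z2 a1 : 'rV[R]_k) (t : R) : 0 < t -> t <= 1 ->
  dotv a1 (t *: (z2 - z1)) <= f ((1 - t) *: z1 + t *: z2) - f z1 ->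
  dotv a1 (z2 - z1) <= f z2 - f z1 - s / 2 * (1 - t) * dotv (P (z2 - z1)) (P (z2 - z1)).
Proof.
move=> t0 t1 hs.
have PB : forall a b, P (a - b) = P a - P b.
  by move=> a b; rewrite PD -scaleN1r PZ scaleN1r.
have := hc z1 z2 t; rewrite ltW //= t1 => /(_ isT).
rewrite /= !enorm_sq (PD ((1 - t) *: z1)) !PZ.
have := sqid t (P z1) (P z2); rewrite PB dotvZr in hs *.
set A := dotv a1 _ in hs *; set Q := dotv (P z2 - P z1) _.
set q1 := dotv (P z1) (P z1); set q2 := dotv (P z2) (P z2).
set qz := dotv (_ + _) _.
set fz := f _ => hid hconv.
have e : s / 2 * qz = s / 2 * ((1 - t) * q1 + t * q2) - s / 2 * (t * (1 - t) * Q).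
  by rewrite -hid; ring.
have key : t * A <= t * (f z2 - f z1 - s / 2 * (1 - t) * Q).
  have hs2 : t * A <= fz - f z1 by exact: hs.
  move: hconv; rewrite e; move: hs2; lra.
by rewrite ler_pM2l in key.
Qed.


Lemma vid {k} (t : R) (a b : 'rV[R]_k) : (1 - t) *: a + t *: b - a = t *: (b - a).
Proof. by apply/matrixP => i j; rewrite !mxE; ring. Qed.

Lemma mono {k p} (f : 'rV[R]_k -> R) (P : 'rV[R]_k -> 'rV[R]_p) (s : R)
  (PD : forall a b, P (a + b) = P a + P b) (PZ : forall t a, P (t *: a) = t *: P a)
  (s0 : 0 <= s)
  (hc : convex_fun (fun z => f z - s / 2 * enorm (P z) ^+ 2))
  (z1 z2 a1 a2 : 'rV[R]_k) :
  subdiff f z1 a1 -> subdiff f z2 a2 ->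
  s / 2 * dotv (P (z1 - z2)) (P (z1 - z2)) <= dotv (a1 - a2) (z1 - z2).
Proof.
have PB : forall a b, P (a - b) = P a - P b.
  by move=> a b; rewrite PD -scaleN1r PZ scaleN1r.
case=> d1 d1p h1 [d2 d2p h2].
set N := enorm (z2 - z1).
have N0 : 0 <= N by apply: enorm_ge0.
have N' : enorm (z1 - z2) = N by rewrite -opprB enormN.
set d := Num.min d1 d2.
have d0 : 0 < d by rewrite lt_min d1p d2p.
set t := d / (2 * N + 2 * d).
have den : 0 < 2 * N + 2 * d by lra.
have t0 : 0 < t by rewrite divr_gt0.
have th : t <= 1 / 2 by rewrite ler_pdivrMr // mulrC mulrA; lra.
have tN : t * N < d by rewrite mulrAC ltr_pdivrMr //; nra.
have hd1 : d <= d1 by rewrite ge_min lexx.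
have hd2 : d <= d2 by rewrite ge_min lexx orbT.
have t1 : t <= 1 by lra.
have S1 := h1 ((1 - t) *: z1 + t *: z2).
rewrite vid (enormZ _ _ (ltW t0)) -/N in S1.
have {}S1 := @side k p f P s PD PZ hc z1 z2 a1 t t0 t1 (S1 (lt_le_trans tN hd1)).
have S2 := h2 ((1 - t) *: z2 + t *: z1).
rewrite vid (enormZ _ _ (ltW t0)) N' in S2.
have {}S2 := @side k p f P s PD PZ hc z2 z1 a2 t t0 t1 (S2 (lt_le_trans tN hd2)).
have eQ : dotv (P (z2 - z1)) (P (z2 - z1)) = dotv (P (z1 - z2)) (P (z1 - z2)).
  by rewrite -(opprB z1 z2) -scaleN1r PZ !scaleN1r dotvNl dotvNr opprK.
rewrite eQ -(opprB z1 z2) dotvNr in S1.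
rewrite dotvBl.
set Q := dotv (P (z1 - z2)) _ in S1 S2 *.
have Q0 : 0 <= Q by apply: dotv_ge0.
have h : 0 <= s * Q * (1 / 2 - t) by rewrite !mulr_ge0 // subr_ge0.
move: S1 S2 h; lra.
Qed.


Lemma marg_convex {n m} (f : 'rV[R]_(n + m) -> R) : convex_fun f ->
  (forall x : 'rV[R]_n, has_lbound (range (fun y : 'rV[R]_m => f (row_mx x y)))) ->
  convex_fun (marg f).
Proof.
move=> hf hlb a b t /andP[t0 t1].
apply/ler_addgt0Pr => e e0.
have ne : forall x : 'rV[R]_n, range (fun y : 'rV[R]_m => f (row_mx x y)) !=set0.
  by move=> x; exists (f (row_mx x 0)); exists 0.
have ea : marg f a < marg f a + e by rewrite ltrDl.
have [_ [ya _ <-] ha] := inf_lt (ne a) ea.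
have eb : marg f b < marg f b + e by rewrite ltrDl.
have [_ [yb _ <-] hb] := inf_lt (ne b) eb.
have h1 : marg f ((1 - t) *: a + t *: b) <= f (row_mx ((1 - t) *: a + t *: b) ((1 - t) *: ya + t *: yb)).
  by apply: (ge_inf (hlb _)); exists ((1 - t) *: ya + t *: yb).
rewrite -add_row_mx -!scale_row_mx in h1.
have h2 := hf (row_mx a ya) (row_mx b yb) t; rewrite t0 t1 /= in h2.
have {}h2 := h2 isT.
have h3 : (1 - t) * f (row_mx a ya) <= (1 - t) * (marg f a + e).
  by rewrite ler_wpM2l ?subr_ge0 // ltW.
have h4 : t * f (row_mx b yb) <= t * (marg f b + e).
  by rewrite ler_wpM2l // ltW.
have := le_trans h1 h2; move: h3 h4; rewrite /marg; lra.
Qed.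

Lemma firm {k} (a d : 'rV[R]_k) : 0 <= dotv (a - d) d -> enorm d <= enorm a.
Proof.
rewrite dotvBl -enorm_sq => h.
have := CS a d; have := enorm_ge0 a; have := enorm_ge0 d.
move: h; set x := enorm d; set y := enorm a => h hx hy hc.
rewrite expr2 in h; nra.
Qed.


Lemma vid2 {k} (a b c d : 'rV[R]_k) : (a - b) - (c - d) = (a - c) - (b - d).
Proof. by apply/matrixP => i j; rewrite !mxE; ring. Qed.

Lemma rsubB {n m} (a b : 'rV[R]_(n + m)) : rsubmx (a - b) = rsubmx a - rsubmx b.
Proof. by apply/matrixP => i j; rewrite !mxE. Qed.

Lemma rsubD {n m} (a b : 'rV[R]_(n + m)) : rsubmx (a + b) = rsubmx a + rsubmx b.
Proof. by apply/matrixP => i j; rewrite !mxE. Qed.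

Lemma rsubZ {n m} t (a : 'rV[R]_(n + m)) : rsubmx (t *: a) = t *: rsubmx a.
Proof. by apply/matrixP => i j; rewrite !mxE. Qed.

Lemma conv0 {k} (h : 'rV[R]_k -> R) : convex_fun h ->
  convex_fun (fun z => h z - 0 / 2 * enorm z ^+ 2).
Proof. by move=> hc a b t ht; rewrite !mul0r !subr0; apply: hc. Qed.

Lemma nonexp {k} (h : 'rV[R]_k -> R) (T : 'rV[R]_k -> 'rV[R]_k) :
  convex_fun h -> (forall w, subdiff h (T w) (w - T w)) ->
  forall w1 w2, enorm (T w1 - T w2) <= enorm (w1 - w2).
Proof.
move=> hc hs w1 w2; apply: firm.
have := @mono k k h (fun z => z) 0 (fun _ _ => erefl) (fun _ _ => erefl) (lexx 0) (@conv0 k h hc)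
  _ _ _ _ (hs w1) (hs w2).
by rewrite /= vid2 !mul0r.
Qed.

Lemma le3 {n m} (x u : 'rV[R]_n) (y : 'rV[R]_m) :
  [/\ enorm x <= enorm3 x u y, enorm u <= enorm3 x u y & enorm y <= enorm3 x u y].
Proof.
have hx := enorm_ge0 x; have hu := enorm_ge0 u; have hy := enorm_ge0 y.
have e : enorm3 x u y ^+ 2 = enorm x ^+ 2 + enorm u ^+ 2 + enorm y ^+ 2.
  by rewrite sqr_sqrtr // !addr_ge0 // sqr_ge0.
have h3 : 0 <= enorm3 x u y by apply: sqrtr_ge0.
have sx := sqr_ge0 (enorm x); have su := sqr_ge0 (enorm u); have sy := sqr_ge0 (enorm y).
by split; apply: sq_le => //; rewrite e; lra.
Qed.

End V.

Theorem lemma2p14 (R : realType) (n m : nat) (f : 'rV[R]_(n + m) -> R)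
  (H1 : 'rV[R]_n -> 'rV[R]_n) (H : 'rV[R]_(n + m) -> 'rV[R]_(n + m)) :
  convex_fun f ->
  (forall x : 'rV[R]_n, has_lbound (range (fun y : 'rV[R]_m => f (row_mx x y)))) ->
  (forall u x : 'rV[R]_n, H1 u = x <-> subdiff (marg f) x (u - x)) ->
  (forall w z : 'rV[R]_(n + m), H w = z <-> subdiff f z (w - z)) ->
  (exists L : R, forall (x1 u1 x2 u2 : 'rV[R]_n) (y1 y2 : 'rV[R]_m),
      enorm (Jmap H1 H x1 u1 y1 - Jmap H1 H x2 u2 y2)
        <= L * enorm3 (x1 - x2) (u1 - u2) (y1 - y2)) /\
  ((exists sigma : R, 0 < sigma /\
      convex_fun (fun z : 'rV[R]_(n + m) =>
        f z - sigma / 2 * enorm (rsubmx z) ^+ 2)) ->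
   exists2 lambda : R, 0 < lambda &
     forall (x u : 'rV[R]_n) (y1 y2 : 'rV[R]_m),
       enorm (Jmap H1 H x u y1 - Jmap H1 H x u y2) >= lambda * enorm (y1 - y2)).
Proof.
move=> hf hlb hH1 hH.
have hg := marg_convex _ hf hlb.
have s1 : forall u, subdiff (marg f) (H1 u) (u - H1 u) by move=> u; apply/hH1.
have sH : forall w, subdiff f (H w) (w - H w) by move=> w; apply/hH.
have N1 := nonexp _ _ hg s1.
have NH := nonexp _ _ hf sH.
split.
  exists 5 => x1 u1 x2 u2 y1 y2.
  have [ex eu ey] := le3 (x1 - x2) (u1 - u2) (y1 - y2).
  rewrite /Jmap.
  set w1 := row_mx _ y1; set w2 := row_mx _ y2.
  rewrite vid2 -rsubB.
  have a1 := enorm_tri (y1 - y2) (- rsubmx (H w1 - H w2)).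
  rewrite enormN in a1.
  have a2 := le_trans (enorm_rsub (H w1 - H w2)) (NH w1 w2).
  have a3 : w1 - w2 = row_mx ((H1 (x1 + u1) - H1 (x2 + u2)) + (u1 - u2)) (y1 - y2).
    rewrite /w1 /w2 opp_row_mx add_row_mx; congr row_mx.
    by apply/matrixP => i j; rewrite !mxE; ring.
  have a4 := enorm_row_mx ((H1 (x1 + u1) - H1 (x2 + u2)) + (u1 - u2)) (y1 - y2).
  rewrite -a3 in a4.
  have a5 := enorm_tri (H1 (x1 + u1) - H1 (x2 + u2)) (u1 - u2).
  have a6 := N1 (x1 + u1) (x2 + u2).
  have a7 : x1 + u1 - (x2 + u2) = (x1 - x2) + (u1 - u2).
    by apply/matrixP => i j; rewrite !mxE; ring.
  rewrite a7 in a6.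
  have a8 := enorm_tri (x1 - x2) (u1 - u2).
  lra.
move=> [sigma [sg hc]].
exists (sigma / (sigma + 2)); first by rewrite divr_gt0 //; lra.
move=> x u y1 y2; rewrite /Jmap.
set w1 := row_mx _ y1; set w2 := row_mx _ y2.
have M := @mono R (n + m) m f (@rsubmx R 1 n m) sigma rsubD rsubZ (ltW sg) hc
  _ _ _ _ (sH w1) (sH w2).
rewrite vid2 in M.
have ew : w1 - w2 = row_mx 0 (y1 - y2).
  by rewrite /w1 /w2 opp_row_mx add_row_mx subrr.
rewrite ew dotvBl in M.
set dz := H w1 - H w2 in M *.
rewrite -[X in dotv _ X - _](hsubmxK dz) dotv_row_mx dotv0l add0r in M.
rewrite -[X in _ - dotv X _](hsubmxK dz) -[X in _ - dotv _ X](hsubmxK dz) dotv_row_mx in M.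
rewrite vid2 -rsubB -/dz.
set e := rsubmx dz in M *.
set Y := y1 - y2 in M *.
have ql := dotv_ge0 (lsubmx dz).
have cs := CS Y e.
rewrite -enorm_sq in M.
have eg := enorm_ge0 e; have yg := enorm_ge0 Y.
have k1 : (sigma + 2) * enorm e <= 2 * enorm Y.
  rewrite expr2 in M.
  case: (lerP ((sigma + 2) * enorm e) (2 * enorm Y)) => // hlt.
  have ep : 0 < enorm e by nra.
  nra.
have tr := enorm_tri (Y - e) e.
rewrite subrK in tr.
rewrite mulrAC ler_pdivrMr; last lra.
have := enorm_ge0 (Y - e).
nra.
Qed.
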